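(* Let $(\mathbf{X},Y,\hat Y)$ be random variables on $\mathcal{X}\times\mathcal{Y}\times\mathcal{Y}$ with $P(\hat Y=i\mid Y=j)=p_{i,j}$ for all $i,j\in\{1,\dots,K\}$ (so $\sum_{i=1}^K p_{i,j}=1$ for each $j$), and assume $\hat Y$ is conditionally independent of $\mathbf{X}$ given $Y$ (i.e. $P(\mathbf{X}\mid Y)=P(\mathbf{X}\mid Y,\hat Y)$), so that $P(\hat Y=i\mid\mathbf{X})=\sum_{j=1}^K p_{i,j}P(Y=j\mid\mathbf{X})$. Let $Q$ be any probability distribution on a hypothesis class $\mathcal{H}$ and let $\hat M$ be a random variable such that, conditionally on $\mathbf{X}=\mathbf{x}$, $\hat M$ is discrete and equals $M_Q(\mathbf{x},i)$ with probability $P(\hat Y=i\mid\mathbf{X}=\mathbf{x})$, $i=1,\dots,K$. Let $\mu^{\hat M}_1=\mathbb{E}[\hat M]$, $\mu^{\hat M}_2=\mathbb{E}[\hat M^2]$, and $\beta=\max_{i\in\{1,\dots,K\}}\sum_{j=1}^K p_{i,j}$. If $\mu^{\hat M}_1>0$, then $$R(B_{Q_{\mathrm{opt}}})\le 1-\frac{1}{\beta}\cdot\frac{(\mu^{\hat M}_1)^2}{\mu^{\hat M}_2}.$$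
   Context: $\mathcal{X}\subset\mathbb{R}^d$, $\mathcal{Y}=\{1,\dots,K\}$, $K\ge2$; $\mathcal{H}$ is a class of classifiers $h:\mathcal{X}\to\mathcal{Y}$. For a distribution $Q$ on $\mathcal{H}$: votes $v_Q(\mathbf{x},c)=\mathbb{E}_{h\sim Q}\mathbb{1}[h(\mathbf{x})=c]$, margin $M_Q(\mathbf{x},y)=v_Q(\mathbf{x},y)-\max_{c\ne y}v_Q(\mathbf{x},c)$. $B_{Q_{\mathrm{opt}}}$ denotes the optimal (maximum a posteriori) classifier $B_{Q_{\mathrm{opt}}}(\mathbf{x})=\arg\max_{c\in\mathcal{Y}}P(Y=c\mid\mathbf{X}=\mathbf{x})$, whose risk with respect to the true label is $R(B_{Q_{\mathrm{opt}}})=\mathbb{E}_{\mathbf{X}}\big[1-\max_{j}P(Y=j\mid\mathbf{X})\big]$. $\hat Y$ is an imperfect (noisy) version of the label $Y$. *)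

(* Defs.v *)
From Stdlib Require Import Reals List Lra.
Open Scope R_scope.

(* Labels Y = {1..K} are represented as the naturals 0 .. K-1. *)

Definition sumK (K : nat) (f : nat -> R) : R :=
  fold_right (fun i acc => f i + acc) 0 (seq 0 K).

(* Maximum of a list of reals; d is only returned for the empty list. *)
Fixpoint lmax (d : R) (l : list R) : R :=
  match l with
  | nil => d
  | a :: nil => a
  | a :: t => Rmax a (lmax d t)
  end.

(* max over labels i in {0..K-1} of f i (K >= 1 assumed where used) *)
Definition maxK (K : nat) (f : nat -> R) : R := lmax 0 (map f (seq 0 K)).

Definition maxK_neq (K : nat) (y : nat) (f : nat -> R) : R :=
  lmax 0 (map f (filter (fun c => negb (Nat.eqb c y)) (seq 0 K))).

Definition bounded {T : Type} (f : T -> R) : Prop :=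
  exists B, forall t, Rabs (f t) <= B.

(* An expectation operator of a probability distribution on T:
   a normalized, positive linear functional on bounded functions.
   (Every probability measure gives one, by integration of bounded
   measurable functions extended to all bounded functions.) *)
Definition is_expectation {T : Type} (E : (T -> R) -> R) : Prop :=
  (forall f g, bounded f -> bounded g ->
     E (fun t => f t + g t) = E f + E g) /\
  (forall (c : R) f, bounded f -> E (fun t => c * f t) = c * E f) /\
  (forall f, bounded f -> (forall t, 0 <= f t) -> 0 <= E f) /\
  E (fun _ => 1) = 1.

Definition votes {X H : Type} (EQ : (H -> R) -> R) (clf : H -> X -> nat)
  (x : X) (c : nat) : R :=
  EQ (fun h => if Nat.eqb (clf h x) c then 1 else 0).

Definition margin {X H : Type} (K : nat) (EQ : (H -> R) -> R)
  (clf : H -> X -> nat) (x : X) (y : nat) : R :=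
  votes EQ clf x y - maxK_neq K y (votes EQ clf x).

(* P(Yhat = i | X = x) = sum_j p_{i,j} P(Y = j | X = x) *)
Definition eta_hat (K : nat) (p : nat -> nat -> R) {X : Type}
  (eta : X -> nat -> R) (x : X) (i : nat) : R :=
  sumK K (fun j => p i j * eta x j).

(* Risk of the optimal (MAP) classifier: E_X[1 - max_j P(Y=j|X)] *)
Definition risk_opt {X : Type} (K : nat) (EX : (X -> R) -> R)
  (eta : X -> nat -> R) : R :=
  EX (fun x => 1 - maxK K (eta x)).

(* mu_1 = E[Mhat] = E_X[ sum_i P(Yhat=i|X) M_Q(X,i) ] *)
Definition mu1 {X H : Type} (K : nat) (EX : (X -> R) -> R)
  (EQ : (H -> R) -> R) (clf : H -> X -> nat)
  (p : nat -> nat -> R) (eta : X -> nat -> R) : R :=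
  EX (fun x => sumK K (fun i => eta_hat K p eta x i * margin K EQ clf x i)).

(* mu_2 = E[Mhat^2] = E_X[ sum_i P(Yhat=i|X) M_Q(X,i)^2 ] *)
Definition mu2 {X H : Type} (K : nat) (EX : (X -> R) -> R)
  (EQ : (H -> R) -> R) (clf : H -> X -> nat)
  (p : nat -> nat -> R) (eta : X -> nat -> R) : R :=
  EX (fun x => sumK K (fun i => eta_hat K p eta x i * (margin K EQ clf x i) ^ 2)).

Definition beta (K : nat) (p : nat -> nat -> R) : R :=
  maxK K (fun i => sumK K (fun j => p i j)).

(* Main.v *)
Require Import Defs.
From Stdlib Require Import Reals List Lra Lia FunctionalExtensionality Classical.
Open Scope R_scope.

Definition fsum (l : list nat) (f : nat -> R) : R :=
  fold_right (fun i acc => f i + acc) 0 l.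

Lemma sumK_fsum K f : sumK K f = fsum (seq 0 K) f.
Proof. reflexivity. Qed.

Lemma fsum_plus l f g : fsum l (fun i => f i + g i) = fsum l f + fsum l g.
Proof. induction l; simpl; [lra|rewrite IHl; lra]. Qed.

Lemma fsum_scal l c f : fsum l (fun i => c * f i) = c * fsum l f.
Proof. induction l; simpl; [lra|rewrite IHl; lra]. Qed.

Lemma fsum_le l f g : (forall i, In i l -> f i <= g i) -> fsum l f <= fsum l g.
Proof.
  induction l; simpl; intros Hi; [lra|].
  pose proof (Hi a (or_introl eq_refl)).
  assert (fsum l f <= fsum l g) by (apply IHl; auto). lra.
Qed.

Lemma fsum_const l c : fsum l (fun _ => c) = INR (length l) * c.
Proof. induction l; simpl length; rewrite ?S_INR; simpl; [lra|rewrite IHl; lra]. Qed.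

Lemma fsum_zero l f : (forall i, In i l -> f i = 0) -> fsum l f = 0.
Proof.
  induction l; simpl; intros Hi; [lra|].
  rewrite Hi by auto. rewrite IHl by auto. lra.
Qed.

Lemma fsum_ind l i0 a : NoDup l -> In i0 l ->
  fsum l (fun i => if Nat.eqb i i0 then a else 0) = a.
Proof.
  induction l as [|x l IH]; simpl; intros Hnd Hin; [contradiction|].
  inversion Hnd; subst.
  destruct (Nat.eqb x i0) eqn:E.
  - apply Nat.eqb_eq in E; subst.
    rewrite fsum_zero; [lra|].
    intros i Hi. destruct (Nat.eqb i i0) eqn:E2; auto.
    apply Nat.eqb_eq in E2; subst; contradiction.
  - destruct Hin as [Hin|Hin]; [subst; rewrite Nat.eqb_refl in E; discriminate|].
    rewrite IH; auto; lra.
Qed.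

Lemma fsum_abs l f c : (forall i, In i l -> Rabs (f i) <= c) ->
  Rabs (fsum l f) <= INR (length l) * c.
Proof.
  induction l; simpl length; rewrite ?S_INR; simpl; intros Hi.
  - rewrite Rabs_R0; lra.
  - pose proof (Hi a (or_introl eq_refl)).
    assert (Rabs (fsum l f) <= INR (length l) * c) by (apply IHl; auto).
    pose proof (Rabs_triang (f a) (fsum l f)). lra.
Qed.

Lemma fsum_ge_term l f j : In j l -> (forall i, In i l -> 0 <= f i) -> f j <= fsum l f.
Proof.
  induction l; simpl; intros Hj Hi; [contradiction|].
  assert (0 <= fsum l f).
  { rewrite <- (fsum_zero l (fun _ => 0)) by auto. apply fsum_le; auto. }
  destruct Hj as [Hj|Hj].
  - subst. lra.
  - pose proof (Hi a (or_introl eq_refl)).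
    assert (f j <= fsum l f) by (apply IHl; auto). lra.
Qed.

Lemma lmax_ge d l a : In a l -> a <= lmax d l.
Proof.
  induction l as [|b t IH]; simpl; intros H; [contradiction|].
  destruct t as [|c t'].
  - destruct H as [H|H]; [subst; lra|contradiction].
  - destruct H as [H|H].
    + subst. apply Rmax_l.
    + eapply Rle_trans; [apply IH; auto|apply Rmax_r].
Qed.

Lemma lmax_le d l c : d <= c -> (forall a, In a l -> a <= c) -> lmax d l <= c.
Proof.
  induction l as [|b t IH]; simpl; intros Hd H; [auto|].
  destruct t as [|x t'].
  - apply H; auto.
  - apply Rmax_lub; [apply H; auto|apply IH; auto].
Qed.

Lemma lmax_lo d l c : c <= d -> (forall a, In a l -> c <= a) -> c <= lmax d l.
Proof.
  induction l as [|b t IH]; simpl; intros Hd H; [auto|].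
  destruct t as [|x t'].
  - apply H; auto.
  - eapply Rle_trans; [|apply Rmax_l]. apply H; auto.
Qed.

Lemma bounded_plus {T} (f g : T -> R) : Defs.bounded f -> Defs.bounded g -> Defs.bounded (fun t => f t + g t).
Proof.
  intros [a Ha] [b Hb]; exists (a + b); intro t.
  pose proof (Rabs_triang (f t) (g t)). pose proof (Ha t); pose proof (Hb t). lra.
Qed.

Lemma bounded_scal {T} c (f : T -> R) : Defs.bounded f -> Defs.bounded (fun t => c * f t).
Proof.
  intros [a Ha]; exists (Rabs c * a); intro t. rewrite Rabs_mult.
  apply Rmult_le_compat_l; [apply Rabs_pos|auto].
Qed.

Lemma E_lin2 {T} (E : (T -> R) -> R) a b f g : is_expectation E -> Defs.bounded f -> Defs.bounded g ->
  E (fun t => a * f t + b * g t) = a * E f + b * E g.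
Proof.
  intros [Hadd [Hsc _]] Hf Hg.
  rewrite (Hadd (fun t => a * f t) (fun t => b * g t)) by (apply bounded_scal; auto).
  rewrite !Hsc; auto.
Qed.

Lemma E_le {T} (E : (T -> R) -> R) f g : is_expectation E -> Defs.bounded f -> Defs.bounded g ->
  (forall t, f t <= g t) -> E f <= E g.
Proof.
  intros HE Hf Hg Hle. pose proof HE as [Hadd [Hsc [Hpos _]]].
  assert (Hd : Defs.bounded (fun t => g t - f t)).
  { assert (Defs.bounded (fun t => 1 * g t + (-1) * f t)).
    { apply bounded_plus; apply bounded_scal; auto. }
    destruct H as [B HB]; exists B; intro t; specialize (HB t).
    replace (g t - f t) with (1 * g t + -1 * f t) by ring; auto. }
  assert (E g = E f + E (fun t => g t - f t)).
  { rewrite <- Hadd by auto. f_equal. extensionality t. ring. }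
  assert (0 <= E (fun t => g t - f t)) by (apply Hpos; auto; intro t; specialize (Hle t); lra).
  lra.
Qed.

Lemma E_one {T} (E : (T -> R) -> R) f : is_expectation E -> Defs.bounded f ->
  E (fun t => 1 - f t) = 1 - E f.
Proof.
  intros HE Hf. pose proof HE as [_ [_ [_ H1]]].
  replace (fun t => 1 - f t) with (fun t => 1 * (fun _ => 1) t + (-1) * f t)
    by (extensionality t; simpl; ring).
  rewrite E_lin2; auto. rewrite H1; ring. exists 1; intros; rewrite Rabs_R1; lra.
Qed.

Lemma votes_bounds {X H} (EQ : (H -> R) -> R) clf (x : X) c :
  is_expectation EQ -> 0 <= votes EQ clf x c <= 1.
Proof.
  intros HE. pose proof HE as [Hadd [Hsc [Hpos H1]]]. unfold votes.
  set (ind := fun h => if Nat.eqb (clf h x) c then 1 else 0).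
  assert (Hb : Defs.bounded ind) by (exists 1; intro h; unfold ind; destruct Nat.eqb;
    rewrite ?Rabs_R1, ?Rabs_R0; lra).
  split.
  - apply Hpos; auto. intro h; unfold ind; destruct Nat.eqb; lra.
  - rewrite <- H1. apply E_le; auto. exists 1; intros; rewrite Rabs_R1; lra.
    intro h; unfold ind; destruct Nat.eqb; lra.
Qed.

Lemma in_seq0 K i : In i (seq 0 K) <-> (i < K)%nat.
Proof. rewrite in_seq; lia. Qed.

Lemma maxK_ge K f i : (i < K)%nat -> f i <= maxK K f.
Proof. intros; unfold maxK; apply lmax_ge, in_map, in_seq0; auto. Qed.

Lemma maxK_le K f c : 0 <= c -> (forall i, (i < K)%nat -> f i <= c) -> maxK K f <= c.
Proof.
  intros; unfold maxK; apply lmax_le; auto.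
  intros a Ha; apply in_map_iff in Ha as [i [<- Hi]]; apply H0, in_seq0; auto.
Qed.

Lemma maxK_lo K f c : c <= 0 -> (forall i, (i < K)%nat -> c <= f i) -> c <= maxK K f.
Proof.
  intros; unfold maxK; apply lmax_lo; auto.
  intros a Ha; apply in_map_iff in Ha as [i [<- Hi]]; apply H0, in_seq0; auto.
Qed.

Lemma maxKneq_ge K y f i : (i < K)%nat -> i <> y -> f i <= maxK_neq K y f.
Proof.
  intros; unfold maxK_neq; apply lmax_ge, in_map, filter_In; split.
  apply in_seq0; auto. apply Nat.eqb_neq in H0; rewrite H0; auto.
Qed.

Lemma maxKneq_bounds K y f : (forall i, 0 <= f i <= 1) -> 0 <= maxK_neq K y f <= 1.
Proof.
  intros Hf; unfold maxK_neq; split; [apply lmax_lo|apply lmax_le]; try lra;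
  intros a Ha; apply in_map_iff in Ha as [i [<- _]]; apply Hf.
Qed.

Theorem proposition1
  (X H : Type) (K : nat) (HK : (2 <= K)%nat)
  (EX : (X -> R) -> R) (HEX : is_expectation EX)
  (EQ : (H -> R) -> R) (HEQ : is_expectation EQ)
  (clf : H -> X -> nat) (Hclf : forall h x, (clf h x < K)%nat)
  (eta : X -> nat -> R)
  (Heta_nonneg : forall x j, (j < K)%nat -> 0 <= eta x j)
  (Heta_sum : forall x, sumK K (eta x) = 1)
  (p : nat -> nat -> R)
  (Hp_nonneg : forall i j, (i < K)%nat -> (j < K)%nat -> 0 <= p i j)
  (Hp_sum : forall j, (j < K)%nat -> sumK K (fun i => p i j) = 1)
  (Hmu1 : 0 < mu1 K EX EQ clf p eta) :
  risk_opt K EX eta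
    <= 1 - (1 / beta K p) * ((mu1 K EX EQ clf p eta) ^ 2 / mu2 K EX EQ clf p eta).
Proof.
  assert (Hv : forall x c, 0 <= votes EQ clf x c <= 1) by (intros; apply votes_bounds; auto).
  assert (HM : forall x i, Rabs (margin K EQ clf x i) <= 1).
  { intros x i; unfold margin.
    pose proof (Hv x i). pose proof (maxKneq_bounds K i (votes EQ clf x) (Hv x)).
    apply Rabs_le; lra. }
  assert (Hrow : forall i, (i < K)%nat -> sumK K (fun j => p i j) <= beta K p).
  { intros; unfold beta; apply (maxK_ge K (fun i => sumK K (fun j => p i j))); auto. }
  assert (Hrow0 : forall i, (i < K)%nat -> 0 <= sumK K (fun j => p i j)).
  { intros i Hi. rewrite sumK_fsum. rewrite <- (fsum_zero (seq 0 K) (fun _ => 0)) by auto.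
    apply fsum_le; intros j Hj; apply in_seq0 in Hj; auto. }
  assert (Hb : 0 < beta K p).
  { assert (H0K : (0 < K)%nat) by lia.
    pose proof (Hp_sum 0%nat H0K) as Hs. rewrite sumK_fsum in Hs.
    assert (fsum (seq 0 K) (fun i => p i 0%nat) <= fsum (seq 0 K) (fun _ => beta K p)).
    { apply fsum_le; intros i Hi; apply in_seq0 in Hi.
      eapply Rle_trans; [|apply (Hrow i Hi)].
      rewrite sumK_fsum; apply (fsum_ge_term _ (fun j => p i j)); [apply in_seq0; auto|].
      intros j Hj; apply in_seq0 in Hj; auto. }
    rewrite fsum_const, length_seq in H0.
    assert (0 < INR K) by (apply lt_0_INR; lia). nra. }
  assert (Heta1 : forall x j, (j < K)%nat -> eta x j <= 1).
  { intros x j Hj. rewrite <- (Heta_sum x), sumK_fsum.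
    apply fsum_ge_term; [apply in_seq0; auto|]. intros i Hi; apply in_seq0 in Hi; auto. }
  assert (Hm : forall x, 0 <= maxK K (eta x) <= 1).
  { intro x; split; [apply maxK_lo|apply maxK_le]; try lra; intros; auto. }
  assert (Heh_le : forall x i, (i < K)%nat -> eta_hat K p eta x i <= beta K p * maxK K (eta x)).
  { intros x i Hi. unfold eta_hat. rewrite sumK_fsum.
    eapply Rle_trans with (fsum (seq 0 K) (fun j => maxK K (eta x) * p i j)).
    - apply fsum_le; intros j Hj; apply in_seq0 in Hj.
      rewrite Rmult_comm. apply Rmult_le_compat_r; auto. apply maxK_ge; auto.
    - rewrite fsum_scal, <- sumK_fsum. rewrite Rmult_comm.
      apply Rmult_le_compat_r; [apply Hm|]. apply Hrow; auto. }
  assert (Heh0 : forall x i, (i < K)%nat -> 0 <= eta_hat K p eta x i).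
  { intros x i Hi. unfold eta_hat. rewrite sumK_fsum.
    rewrite <- (fsum_zero (seq 0 K) (fun _ => 0)) by auto.
    apply fsum_le; intros j Hj; apply in_seq0 in Hj. apply Rmult_le_pos; auto. }
  assert (Heh1 : forall x i, (i < K)%nat -> eta_hat K p eta x i <= beta K p).
  { intros. eapply Rle_trans; [apply Heh_le; auto|]. pose proof (Hm x).
    rewrite <- (Rmult_1_r (beta K p)) at 2. apply Rmult_le_compat_l; lra. }
  assert (Huniq : forall x i0 i, (i0 < K)%nat -> (i < K)%nat -> i <> i0 ->
            0 < margin K EQ clf x i0 -> margin K EQ clf x i <= 0).
  { intros x i0 i H0 Hi Hne Hpos. unfold margin in *.
    pose proof (maxKneq_ge K i0 (votes EQ clf x) i Hi Hne).
    pose proof (maxKneq_ge K i (votes EQ clf x) i0 H0 (not_eq_sym Hne)). lra. }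
  assert (Hpt : forall x lam, 0 < lam ->
    sumK K (fun i => eta_hat K p eta x i * margin K EQ clf x i) <=
    lam / 2 * sumK K (fun i => eta_hat K p eta x i * margin K EQ clf x i ^ 2)
    + beta K p / (2 * lam) * maxK K (eta x)).
  { intros x lam Hlam.
    assert (Hmx : 0 <= beta K p / (2 * lam) * maxK K (eta x)).
    { apply Rmult_le_pos; [|apply Hm]. apply Rlt_le, Rdiv_lt_0_compat; lra. }
    destruct (classic (exists i0, (i0 < K)%nat /\ 0 < margin K EQ clf x i0)) as [[i0 [Hi0 Hp0]]|Hno].
    - set (a := eta_hat K p eta x i0 / (2 * lam)).
      rewrite !sumK_fsum.
      eapply Rle_trans with (fsum (seq 0 K) (fun i =>
         lam / 2 * (eta_hat K p eta x i * margin K EQ clf x i ^ 2) +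
         (if Nat.eqb i i0 then a else 0))).
      + apply fsum_le; intros i Hi; apply in_seq0 in Hi.
        pose proof (Heh0 x i Hi).
        destruct (Nat.eqb i i0) eqn:E.
        * apply Nat.eqb_eq in E; subst i. unfold a.
          set (m := margin K EQ clf x i0). set (e := eta_hat K p eta x i0).
          assert (e * m <= lam / 2 * (e * m ^ 2) + e / (2 * lam)); [|lra].
          assert (Hk : 0 <= e * (lam * m - 1) ^ 2) by (apply Rmult_le_pos; [assumption|apply pow2_ge_0]).
          assert (e * m = (lam / 2 * (e * m ^ 2) + e / (2 * lam)) - e * (lam * m - 1) ^ 2 / (2 * lam))
            by (field; lra).
          assert (0 <= e * (lam * m - 1) ^ 2 / (2 * lam)) by (apply Rmult_le_pos; [auto|apply Rlt_le, Rinv_0_lt_compat; lra]).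
          lra.
        * apply Nat.eqb_neq in E.
          pose proof (Huniq x i0 i Hi0 Hi E Hp0).
          assert (0 <= lam / 2 * (eta_hat K p eta x i * margin K EQ clf x i ^ 2))
            by (apply Rmult_le_pos; [lra|apply Rmult_le_pos; auto; nra]).
          assert (eta_hat K p eta x i * margin K EQ clf x i <= 0) by nra. lra.
      + rewrite fsum_plus, fsum_scal, fsum_ind; [|apply seq_NoDup|apply in_seq0; auto].
        unfold a. assert (eta_hat K p eta x i0 / (2 * lam) <= beta K p / (2 * lam) * maxK K (eta x)); [|lra].
        unfold Rdiv. rewrite Rmult_assoc, (Rmult_comm (/ (2*lam))), <- Rmult_assoc.
        apply Rmult_le_compat_r; [apply Rlt_le, Rinv_0_lt_compat; lra|]. auto.
    - rewrite !sumK_fsum.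
      assert (fsum (seq 0 K) (fun i => eta_hat K p eta x i * margin K EQ clf x i) <=
              fsum (seq 0 K) (fun i => lam / 2 * (eta_hat K p eta x i * margin K EQ clf x i ^ 2))).
      { apply fsum_le; intros i Hi; apply in_seq0 in Hi. pose proof (Heh0 x i Hi).
        assert (margin K EQ clf x i <= 0) by (apply Rnot_lt_le; intro; apply Hno; eauto).
        assert (0 <= lam / 2 * (eta_hat K p eta x i * margin K EQ clf x i ^ 2))
            by (apply Rmult_le_pos; [lra|apply Rmult_le_pos; auto; nra]).
        nra. }
      rewrite fsum_scal in H0. lra. }
  assert (BA : Defs.bounded (fun x => sumK K (fun i => eta_hat K p eta x i * margin K EQ clf x i))).
  { exists (INR (length (seq 0 K)) * beta K p); intro x. rewrite sumK_fsum. apply fsum_abs.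
    intros i Hi; apply in_seq0 in Hi. rewrite Rabs_mult.
    rewrite Rabs_right by (apply Rle_ge, Heh0; auto).
    pose proof (HM x i). pose proof (Heh0 x i Hi). pose proof (Heh1 x i Hi).
    pose proof (Rabs_pos (margin K EQ clf x i)). nra. }
  assert (BB : Defs.bounded (fun x => sumK K (fun i => eta_hat K p eta x i * margin K EQ clf x i ^ 2))).
  { exists (INR (length (seq 0 K)) * beta K p); intro x. rewrite sumK_fsum. apply fsum_abs.
    intros i Hi; apply in_seq0 in Hi. rewrite Rabs_mult.
    rewrite Rabs_right by (apply Rle_ge, Heh0; auto).
    rewrite <- RPow_abs.
    pose proof (HM x i). pose proof (Heh0 x i Hi). pose proof (Heh1 x i Hi).
    pose proof (Rabs_pos (margin K EQ clf x i)).
    assert (Rabs (margin K EQ clf x i) ^ 2 <= 1) by nra. nra. }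
  assert (Bm : Defs.bounded (fun x => maxK K (eta x))).
  { exists 1; intro x; pose proof (Hm x); apply Rabs_le; lra. }
  assert (HE : forall lam, 0 < lam -> mu1 K EX EQ clf p eta <=
      lam / 2 * mu2 K EX EQ clf p eta + beta K p / (2 * lam) * EX (fun x => maxK K (eta x))).
  { intros lam Hlam. unfold mu1, mu2. rewrite <- E_lin2; auto.
    apply E_le; auto. apply bounded_plus; apply bounded_scal; auto. }
  assert (Hmu2 : 0 <= mu2 K EX EQ clf p eta).
  { unfold mu2. apply (proj1 (proj2 (proj2 HEX))); auto. intro x. rewrite sumK_fsum.
    rewrite <- (fsum_zero (seq 0 K) (fun _ => 0)) by auto.
    apply fsum_le; intros i Hi; apply in_seq0 in Hi. apply Rmult_le_pos; auto. nra. }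
  assert (HEm : 0 <= EX (fun x => maxK K (eta x))).
  { apply (proj1 (proj2 (proj2 HEX))); auto. intro; apply Hm. }
  unfold risk_opt. rewrite E_one; auto.
  set (m1 := mu1 K EX EQ clf p eta) in *. set (m2 := mu2 K EX EQ clf p eta) in *.
  set (b := beta K p) in *. set (Em := EX (fun x => maxK K (eta x))) in *.
  destruct (Rle_lt_or_eq_dec 0 m2 Hmu2) as [Hm2|Hm2].
  - specialize (HE (m1 / m2) ltac:(apply Rdiv_lt_0_compat; lra)).
    replace (m1 / m2 / 2 * m2) with (m1 / 2) in HE by (field; lra).
    set (t := b / (2 * (m1 / m2)) * Em) in HE.
    assert (Ht : t * (2 * m1) = b * Em * m2) by (unfold t; field; lra).
    assert (Hmm : m1 * m1 <= b * Em * m2) by nra.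
    replace (1 / b * (m1 ^ 2 / m2)) with ((m1 * m1) / (b * m2)) by (field; lra).
    assert (m1 * m1 / (b * m2) <= Em); [|lra].
    apply (Rmult_le_reg_r (b * m2)); [nra|].
    unfold Rdiv; rewrite Rmult_assoc, Rinv_l by nra. nra.
  - exfalso. rewrite <- Hm2 in HE.
    specialize (HE ((b * Em + 1) / m1) ltac:(apply Rdiv_lt_0_compat; nra)).
    replace (b / (2 * ((b * Em + 1) / m1)) * Em) with (m1 * (b * Em) / (2 * (b * Em + 1))) in HE
      by (field; nra).
    assert (m1 * (b * Em) / (2 * (b * Em + 1)) < m1); [|lra].
    apply (Rmult_lt_reg_r (2 * (b * Em + 1))); [nra|].
    unfold Rdiv; rewrite Rmult_assoc, Rinv_l by nra.
    assert (0 <= b * Em) by (apply Rmult_le_pos; lra). nra.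
Qed.
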